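(* Let $T>0$, $N=2$, $1<M<2$. Consider minimizing $\mathbb V(T)=\frac12(\xi_1(T)^2+\xi_2(T)^2)$ over $\alpha\in\mathcal U_M$, where $\dot\xi_i=-\xi_i+(1-\alpha_i)\bar\xi$, $\bar\xi=\frac12(\xi_1+\xi_2)$, with $\bar\xi(0)>0$ and $\xi_1(0)>\xi_2(0)$. Let $\alpha$ be an optimal control whose trajectory satisfies $\xi_1(t)\ge\xi_2(t)$ for all $t$, and let $(\lambda_1,\lambda_2)$ be the corresponding covectors given by the Pontryagin maximum principle: $$\dot\lambda_1=\tfrac{1+\alpha_1}{2}\lambda_1-\tfrac{1-\alpha_2}{2}\lambda_2,\quad \dot\lambda_2=\tfrac{1+\alpha_2}{2}\lambda_2-\tfrac{1-\alpha_1}{2}\lambda_1,\quad \lambda(T)=(\xi_1(T),\xi_2(T)),$$ and for almost every $t$, $\alpha(t)$ minimizes $a\mapsto-\bar\xi(t)(a_1\lambda_1(t)+a_2\lambda_2(t))$ over $a\in[0,1]^2$, $a_1+a_2\le M$. Then: (i) if $\lambda_2(T)>0$, then $\lambda_1(t)>0$ and $\lambda_2(t)>0$ for all $t\in[0,T]$; (ii) if $\lambda_2(T)=0$, then $\lambda_1(t)>0$ and $\lambda_2(t)=0$ for all $t\in[0,T]$; (iii) if $\lambda_2(T)<0$, then $\lambda_2(t)<0$ for all $t\in[0,T]$.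
   Context: $\mathcal U_M$ is the set of measurable $\alpha:[0,T]\to[0,1]^2$ with $\alpha_1+\alpha_2\le M$. *)

(* Defs.v *)
From HB Require Import structures.
From mathcomp Require Import all_boot all_order all_algebra.
From mathcomp Require Import all_classical all_reals all_analysis.
Set Implicit Arguments. Unset Strict Implicit. Unset Printing Implicit Defensive.
Import Order.TTheory GRing.Theory Num.Theory.
Local Open Scope classical_set_scope.
Local Open Scope ring_scope.

Section Defs.
Variable R : realType.
Local Notation mu := (@lebesgue_measure R).

(* f is absolutely continuous on [0,T] with a.e. derivative g, in integral
   (Caratheodory) form: g is Lebesgue-integrable on [0,T] and
   f t = f 0 + \int_[0,t] g for all t in [0,T]. *)
Definition ode_sol (T : R) (f g : R -> R) : Prop :=
  mu.-integrable `[0, T] (EFin \o g) /\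
  forall t, 0 <= t <= T -> f t = f 0 + Rintegral mu `[0, t] g.

Definition admissible (T M : R) (a1 a2 : R -> R) : Prop :=
  measurable_fun `[0, T] a1 /\ measurable_fun `[0, T] a2 /\
  forall t, 0 <= t <= T ->
    [/\ 0 <= a1 t <= 1, 0 <= a2 t <= 1 & a1 t + a2 t <= M].

Definition xibar (x1 x2 : R -> R) (t : R) : R := (x1 t + x2 t) / 2.

Definition trajectory (T : R) (a1 a2 : R -> R) (x10 x20 : R)
    (x1 x2 : R -> R) : Prop :=
  x1 0 = x10 /\ x2 0 = x20 /\
  ode_sol T x1 (fun s => - x1 s + (1 - a1 s) * xibar x1 x2 s) /\
  ode_sol T x2 (fun s => - x2 s + (1 - a2 s) * xibar x1 x2 s).

Definition cost (T : R) (x1 x2 : R -> R) : R :=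
  (x1 T ^+ 2 + x2 T ^+ 2) / 2.

Definition optimal (T M x10 x20 : R) (a1 a2 x1 x2 : R -> R) : Prop :=
  admissible T M a1 a2 /\ trajectory T a1 a2 x10 x20 x1 x2 /\
  forall b1 b2 y1 y2 : R -> R,
    admissible T M b1 b2 -> trajectory T b1 b2 x10 x20 y1 y2 ->
    cost T x1 x2 <= cost T y1 y2.

Definition pmp_covector (T M : R) (a1 a2 x1 x2 l1 l2 : R -> R) : Prop :=
  ode_sol T l1 (fun s => (1 + a1 s) / 2 * l1 s - (1 - a2 s) / 2 * l2 s) /\
  ode_sol T l2 (fun s => (1 + a2 s) / 2 * l2 s - (1 - a1 s) / 2 * l1 s) /\
  l1 T = x1 T /\ l2 T = x2 T /\
  {ae mu, forall t, 0 <= t <= T ->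
     forall b1 b2 : R, 0 <= b1 <= 1 -> 0 <= b2 <= 1 -> b1 + b2 <= M ->
       - xibar x1 x2 t * (a1 t * l1 t + a2 t * l2 t)
         <= - xibar x1 x2 t * (b1 * l1 t + b2 * l2 t)}.

End Defs.

(* Main.v *)
Require Import Defs.
From HB Require Import structures.
From mathcomp Require Import all_boot all_order all_algebra.
From mathcomp Require Import all_classical all_reals all_analysis.
From mathcomp Require Import ring lra.
Import Order.TTheory GRing.Theory Num.Theory numFieldNormedType.Exports.
Local Open Scope ring_scope.

Section H.
Variable R : realType.
Local Open Scope classical_set_scope.
Local Notation mu := (@lebesgue_measure R).

Lemma ode_cont (T : R) f g : 0 <= T -> ode_sol T f g -> {within `[0, T]%classic, continuous f}.
Proof.
move=> T0 [ig hf].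
have := parameterized_integral_continuous T0 ig.
move=> hc.
have hc2 : {within `[0, T], continuous (fun x => f 0 + parameterized_integral mu 0 x g)}.
  move=> x; apply: cvgD; first exact: cvg_cst.
  exact: (hc x).
apply: (subspace_eq_continuous _ hc2) => x; rewrite inE /= in_itv /= => /andP[x0 xT].
by rewrite /= [RHS]hf ?x0 ?xT.
Qed.

Lemma ae_mono (P Q : R -> Prop) : (forall x, P x -> Q x) ->
  (\forall x \ae mu, P x) -> (\forall x \ae mu, Q x).
Proof.
move=> PQ hP; apply: (negligibleS _ hP) => x /= nQ Px; exact: nQ (PQ _ Px).
Qed.

Lemma diff_bound (T K B : R) f g u v : 0 <= K -> ode_sol T f g ->
  {ae mu, forall s, 0 <= s <= T -> `|g s| <= K * `|f s|} ->
  0 <= u -> u <= v -> v <= T ->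
  (forall s, u <= s <= v -> `|f s| <= B) ->
  `|f v - f u| <= K * B * (v - u).
Proof.
move=> K0 [ig hf] hae u0 uv vT hB.
have B0 : 0 <= B by apply: le_trans (hB u _); rewrite ?lexx ?uv.
rewrite (hf v) ?(le_trans u0 uv) ?vT // (hf u) ?u0 ?(le_trans uv vT) //.
rewrite opprD addrACA subrr add0r.
have igv : mu.-integrable `[0, v] (EFin \o g).
  apply: integrableS ig => //; apply: subset_itvl; rewrite bnd_simp //.
rewrite (@Rintegral_itvB _ g (BLeft 0) (BRight v) u) ?bnd_simp //.
have iuv : mu.-integrable `]u, v] (EFin \o g).
  apply: integrableS igv => //; apply: subset_itvr; rewrite bnd_simp //.
apply: le_trans (le_normr_Rintegral _ _) _ => //.
rewrite -lee_fin /Rintegral fineK; last first.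
  rewrite ge0_fin_numE; last exact: integral_ge0.
  by move/integrableP: iuv => [_].
have := @integral_le_bound _ _ _ mu `]u, v] (EFin \o g) (K * B)%:E.
move=> /(_ (measurable_itv _) (measurable_int mu iuv)); rewrite lee_fin mulr_ge0 // => /(_ isT).
have hae2 : \forall x \ae mu, `]u, v]%classic x -> (`|(EFin \o g) x| <= (K * B)%:E)%E.
  apply: ae_mono hae => x hx; rewrite /= in_itv /= => /andP[ux xv].
  rewrite lee_fin (le_trans (hx _)); last by rewrite ler_wpM2l // hB // (ltW ux) xv.
    by [].
  by rewrite (le_trans u0 (ltW ux)) (le_trans xv vT).
move=> /(_ hae2) /le_trans; apply.
match goal with |- context[ ((K * B)%:E * ?m)%E ] =>
  have -> : m = (if u < v then (v - u)%:E else 0%E) end.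
  by have := lebesgue_measure_itv `]u, v]%R; rewrite /= EFinB; apply.
case: ifPn => [uv'|].
  by rewrite -EFinM.
rewrite -leNgt => vu; have -> : v = u by apply/eqP; rewrite eq_le uv vu.
by rewrite subrr mulr0 mule0.
Qed.

Lemma local_zero (T K : R) f g t1 : 0 <= K -> ode_sol T f g ->
  {ae mu, forall s, 0 <= s <= T -> `|g s| <= K * `|f s|} ->
  0 <= t1 <= T -> f t1 = 0 ->
  forall t, 0 <= t <= T -> `|t - t1| <= (2 * K + 2)^-1 -> f t = 0.
Proof.
move=> K0 ode hae /andP[t10 t1T] ft1 t /andP[t0 tT] tt1.
set h := (2 * K + 2)^-1 in tt1.
have hK : h * (2 * K + 2) = 1 by rewrite mulVf // gt_eqF // ltr_wpDl // mulr_ge0.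
have h0 : 0 < h by rewrite invr_gt0 ltr_wpDl // mulr_ge0.
have T0 : 0 <= T := le_trans t10 t1T.
set lo := Num.max 0 (t1 - h); set hi := Num.min T (t1 + h).
have lohi : lo <= hi by rewrite ge_max !le_min; apply/andP; split; apply/andP; split; lra.
have sub : `[lo, hi] `<=` `[0, T].
  move=> x; rewrite /= !in_itv /= => /andP[lx xh]; apply/andP; split.
    by apply: le_trans lx; rewrite le_max lexx.
  by apply: le_trans xh _; rewrite ge_min lexx.
have cf := continuous_subspaceW sub (@ode_cont T f g T0 ode).
have cnf : {within `[lo, hi], continuous (fun x => `|f x|)}.
  by move=> x; apply: cvg_norm; exact: cf.
have [c cin cmax] := EVT_max lohi cnf.
move: (cin); rewrite in_itv /= => /andP[loc chi].
have hlo : forall s, lo <= s <= hi -> `|f s| <= `|f c|.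
  by move=> s hs; apply: cmax; rewrite in_itv.
have c0 : 0 <= c by apply: le_trans loc; rewrite le_max lexx.
have cT : c <= T by apply: le_trans chi _; rewrite ge_min lexx.
have key : `|f c| <= K * `|f c| * h.
  have [t1c|ct1] := leP t1 c.
    have := @diff_bound T K `|f c| f g t1 c K0 ode hae t10 t1c cT.
    rewrite ft1 subr0 => /(_ _) /le_trans; apply.
      move=> s /andP[t1s sc]; apply: hlo; apply/andP; split; last exact: le_trans sc chi.
      by apply: le_trans t1s; rewrite ge_max t10 /=; lra.
    rewrite ler_wpM2l ?mulr_ge0 //.
    by move: chi; rewrite le_min => /andP[_]; lra.
  have := @diff_bound T K `|f c| f g c t1 K0 ode hae c0 (ltW ct1) t1T.
  rewrite ft1 sub0r normrN => /(_ _) /le_trans; apply.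
    move=> s /andP[cs st1]; apply: hlo; apply/andP; split; first exact: le_trans loc cs.
    by apply: le_trans st1 _; rewrite le_min t1T /=; lra.
  rewrite ler_wpM2l ?mulr_ge0 //.
  by move: loc; rewrite ge_max => /andP[_]; lra.
have Kh : K * h <= 2^-1.
  have e : 2 * (K * h) = h * (2 * K + 2) - 2 * h by ring.
  rewrite hK in e; lra.
have fc0 : `|f c| = 0.
  apply/eqP; rewrite eq_le normr_ge0 andbT.
  have n0 := normr_ge0 (f c).
  have : `|f c| <= `|f c| * (K * h) by rewrite mulrA (mulrC _ K).
  move=> e; nra.
apply/normr0_eq0/eqP; rewrite eq_le normr_ge0 andbT -fc0 hlo //.
move: tt1; rewrite ler_norml => /andP[a b].
by rewrite ge_max le_min t0 tT /=; apply/andP; split; lra.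
Qed.

Lemma zero_prop (T K : R) f g t0 : 0 <= K -> ode_sol T f g ->
  {ae mu, forall s, 0 <= s <= T -> `|g s| <= K * `|f s|} ->
  0 <= t0 <= T -> f t0 = 0 -> forall t, 0 <= t <= T -> f t = 0.
Proof.
move=> K0 ode hae /andP[t00 t0T] ft0.
set h := (2 * K + 2)^-1.
have h0 : 0 < h by rewrite invr_gt0 ltr_wpDl // mulr_ge0.
have P : forall n : nat, forall t, 0 <= t <= T -> `|t - t0| <= n%:R * h -> f t = 0.
  elim=> [|n IH] t /andP[t0' tT].
    by rewrite mul0r normr_le0 subr_eq0 => /eqP ->.
  have N0 : 0 <= n%:R * h by rewrite mulr_ge0 // ltW.
  have -> : n.+1%:R * h = n%:R * h + h by rewrite -addn1 natrD mulrDl mul1r.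
  set N := n%:R * h in IH N0 *.
  move=> htn.
  have [le|gt] := leP `|t - t0| N; first by apply: IH => //; rewrite t0' tT.
  have [tt0|tt0] := lerP t0 t.
    move: htn gt; rewrite ger0_norm ?subr_ge0 // => htn gt.
    have e1 : f (t0 + N) = 0.
      apply: IH; first by apply/andP; split; lra.
      by rewrite addrC addKr ger0_norm.
    apply: (@local_zero T K f g _ K0 ode hae _ e1 t); first (by apply/andP; split; lra);
      first by rewrite t0' tT.
    by rewrite -/h ger0_norm; lra.
  move: htn gt; rewrite ler0_norm ?subr_le0 ?(ltW tt0) // => htn gt.
  have e1 : f (t0 - N) = 0.
    apply: IH; first by apply/andP; split; lra.
    by rewrite addrAC subrr add0r normrN ger0_norm.
  apply: (@local_zero T K f g _ K0 ode hae _ e1 t); first (by apply/andP; split; lra);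
    first by rewrite t0' tT.
  by rewrite -/h ler0_norm; lra.
move=> t ht; apply: (P (Num.bound (T / h))) => //.
have := archi_boundP (divr_ge0 (le_trans t00 t0T) (ltW h0)).
move=> /ltW; rewrite ler_pdivrMr // => hb.
move: ht => /andP[a b].
apply: le_trans hb; rewrite ler_norml; apply/andP; split; lra.
Qed.

Lemma ivt0 (T : R) (f : R -> R) a b : {within `[0, T]%classic, continuous f} ->
  0 <= a <= T -> 0 <= b <= T -> f a * f b <= 0 ->
  exists c, 0 <= c <= T /\ f c = 0.
Proof.
move=> cf /andP[a0 aT] /andP[b0 bT] fab.
have mm : forall x y : R, x * y <= 0 -> Num.min x y <= 0 <= Num.max x y.
  move=> x y xy; apply/andP; split.
    rewrite ge_min; have [x0|x0] := lerP x 0; first by [].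
    by apply/orP; right; nra.
  rewrite le_max; have [x0|x0] := lerP 0 x; first by [].
  by apply/orP; right; nra.
wlog ab : a b a0 aT b0 bT fab / a <= b.
  move=> W; have [ab|ba] := leP a b; first exact: (W a b).
  by apply: (W b a) => //; [rewrite mulrC | exact: ltW].
have sub : `[a, b] `<=` `[0, T].
  by move=> x; rewrite /= !in_itv /= => /andP[ax xb]; rewrite (le_trans a0 ax) (le_trans xb bT).
have [c cin fc] := IVT ab (continuous_subspaceW sub cf) (mm _ _ fab).
exists c; split => //; apply/andP; move: cin; rewrite in_itv /= => /andP[ac cb]; split.
  exact: le_trans a0 ac.
exact: le_trans cb bT.
Qed.

Lemma sign_keep (T K : R) f g t0 : 0 <= K -> 0 <= T -> ode_sol T f g ->
  {ae mu, forall s, 0 <= s <= T -> `|g s| <= K * `|f s|} ->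
  0 <= t0 <= T -> forall t, 0 <= t <= T ->
  (0 < f t0 -> 0 < f t) /\ (f t0 < 0 -> f t < 0).
Proof.
move=> K0 T0 ode hae ht0 t ht.
have cf := @ode_cont T f g T0 ode.
have H : f t * f t0 <= 0 -> f t0 = 0.
  move=> hp; have [c [hc fc]] := @ivt0 T f t t0 cf ht ht0 hp.
  exact: (@zero_prop T K f g c K0 ode hae hc fc).
split => hf0; rewrite ltNge; apply/negP => hft.
  by move: (hf0); rewrite H ?ltxx //; nra.
by move: (hf0); rewrite H ?ltxx //; nra.
Qed.

Lemma ode_lin (T c1 c2 : R) f1 g1 f2 g2 : ode_sol T f1 g1 -> ode_sol T f2 g2 ->
  ode_sol T (fun s => c1 * f1 s + c2 * f2 s) (fun s => c1 * g1 s + c2 * g2 s).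
Proof.
move=> [i1 h1] [i2 h2]; split.
  apply: (eq_integrable _ _ _ _ (integrableD _ (integrableZl _ c1 i1) (integrableZl _ c2 i2))) => //.
move=> t /andP[t0 tT].
have sub : `[0, t] `<=` `[0, T].
  by apply: subset_itvl; rewrite bnd_simp.
have j1 : mu.-integrable `[0, t] (EFin \o g1) by apply: integrableS i1.
have j2 : mu.-integrable `[0, t] (EFin \o g2) by apply: integrableS i2.
rewrite (h1 t) ?t0 ?tT // (h2 t) ?t0 ?tT // RintegralD //.
- rewrite !RintegralZl //; ring.
- exact: (integrableZl _ c1 j1).
- exact: (integrableZl _ c2 j2).
Qed.

Lemma ode_ext (T : R) f g f' g' : ode_sol T f g -> (forall t, f t = f' t) ->
  (forall t, g t = g' t) -> ode_sol T f' g'.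
Proof.
move=> [i h] ef eg; split.
  by apply: (eq_integrable _ _ _ _ i) => // x _ /=; rewrite eg.
move=> t ht; rewrite -!ef h //; congr (_ + _); apply: eq_Rintegral => x _; exact: eg.
Qed.

Lemma pw (M a1 a2 l1 l2 : R) : 1 < M -> M < 2 -> 0 <= a1 <= 1 -> 0 <= a2 <= 1 ->
  a1 + a2 <= M -> l2 <= l1 ->
  (forall b1 b2 : R, 0 <= b1 <= 1 -> 0 <= b2 <= 1 -> b1 + b2 <= M ->
     b1 * l1 + b2 * l2 <= a1 * l1 + a2 * l2) ->
  `|(1 + a2) / 2 * l2 - (1 - a1) / 2 * l1| <= 2 * `|l2|.
Proof.
move=> M1 M2 /andP[a10 a11] /andP[a20 a21] aM l21 opt.
have [l1p|l1n] := ltrP 0 l1; last first.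
  rewrite [`|l2|]ler0_norm ?(le_trans l21) // ler_norml; apply/andP; split; nra.
have key : (1 - a1) * l1 <= `|l2|.
  have n0 := normr_ge0 l2.
  have [a2s|a2b] := lerP a2 (M - 1).
    have := opt 1 a2; rewrite lexx ler01 a20 a21 => /(_ isT isT).
    move=> /(_ _) h; have {}h := h (ltac:(lra)); nra.
  have := opt 1 (M - 1); rewrite lexx ler01 => /(_ isT).
  move=> /(_ _ _) h; have {}h := h (ltac:(apply/andP; split; lra)) (ltac:(lra)).
  have [l2p|l2n] := lerP 0 l2.
    rewrite ger0_norm //; nra.
  rewrite ltr0_norm //; nra.
have [l2p|l2n] := lerP 0 l2.
  rewrite [`|l2|]ger0_norm // in key *.
  rewrite ler_norml; apply/andP; split; nra.
rewrite [`|l2|]ltr0_norm // in key *.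
rewrite ler_norml; apply/andP; split; nra.
Qed.

End H.

Theorem proposition7 (R : realType) (T M x10 x20 : R)
    (a1 a2 x1 x2 l1 l2 : R -> R) :
  0 < T -> 1 < M -> M < 2 ->
  0 < (x10 + x20) / 2 -> x20 < x10 ->
  optimal T M x10 x20 a1 a2 x1 x2 ->
  (forall t, 0 <= t <= T -> x2 t <= x1 t) ->
  pmp_covector T M a1 a2 x1 x2 l1 l2 ->
  [/\ (0 < l2 T -> forall t, 0 <= t <= T -> 0 < l1 t /\ 0 < l2 t),
      (l2 T = 0 -> forall t, 0 <= t <= T -> 0 < l1 t /\ l2 t = 0)
    & (l2 T < 0 -> forall t, 0 <= t <= T -> l2 t < 0)].
Proof.
move=> T0' M1 M2 xb0 x21 [[_ [_ hab]] [[x10e [x20e [ode1 ode2]]] _]] x12 [odel1 [odel2 [l1T [l2T hpmp]]]].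
have T0 : 0 <= T := ltW T0'.
have TT : 0 <= T <= T by rewrite T0 lexx.
have odexb := @ode_ext R T _ _ (xibar x1 x2) (fun s => - ((a1 s + a2 s) / 2) * xibar x1 x2 s)
  (@ode_lin R T (2^-1) (2^-1) _ _ _ _ ode1 ode2)
  (fun t => ltac:(rewrite /xibar; ring)) _.
have : forall t, 2^-1 * (- x1 t + (1 - a1 t) * xibar x1 x2 t) +
    2^-1 * (- x2 t + (1 - a2 t) * xibar x1 x2 t) =
    - ((a1 t + a2 t) / 2) * xibar x1 x2 t.
  by move=> t; rewrite /xibar; field.
move=> /odexb {}odexb.
have xbpos : forall t, 0 <= t <= T -> 0 < xibar x1 x2 t.
  move=> t ht.
  have aeb : {ae lebesgue_measure, forall s, 0 <= s <= T ->
     `|- ((a1 s + a2 s) / 2) * xibar x1 x2 s| <= 1 * `|xibar x1 x2 s|}.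
    apply: aeW => s hs; have [/andP[? ?] /andP[? ?] ?] := hab s hs.
    rewrite normrM normrN mul1r [`|_ / 2|]ger0_norm; last lra.
    by apply: ler_piMl; [exact: normr_ge0 | lra].
  have h0 : (0:R) <= 0 <= T by apply/andP; split; lra.
  apply: (proj1 (@sign_keep R T 1 _ _ 0 ler01 T0 odexb aeb h0 t ht)).
  by rewrite /xibar x10e x20e.
have oded0 := @ode_lin R T 1 (-1) _ _ _ _ odel1 odel2.
have oded := @ode_ext R T _ _ (fun s => l1 s - l2 s) (fun s => l1 s - l2 s) oded0
  (fun t => ltac:(ring)) _.
have : forall t, 1 * ((1 + a1 t) / 2 * l1 t - (1 - a2 t) / 2 * l2 t) +
    -1 * ((1 + a2 t) / 2 * l2 t - (1 - a1 t) / 2 * l1 t) = l1 t - l2 t.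
  by move=> t; field.
move=> /oded {oded0}oded.
have aed : {ae lebesgue_measure, forall s, 0 <= s <= T ->
     `|l1 s - l2 s| <= 1 * `|l1 s - l2 s|}.
  by apply: aeW => s _; rewrite mul1r.
have dpos : forall t, 0 <= t <= T -> l2 t <= l1 t.
  move=> t ht; rewrite -subr_ge0.
  have := x12 T TT; rewrite -l1T -l2T -subr_ge0 le_eqVlt => /orP[/eqP dT|dT].
    by rewrite (@zero_prop R T 1 _ _ T ler01 oded aed TT (esym dT) t ht).
  exact/ltW/(proj1 (@sign_keep R T 1 _ _ T ler01 T0 oded aed TT t ht)).
have aeb2 : {ae lebesgue_measure, forall s, 0 <= s <= T ->
     `|(1 + a2 s) / 2 * l2 s - (1 - a1 s) / 2 * l1 s| <= 2 * `|l2 s|}.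
  apply: (@ae_mono R _ _ _ hpmp) => s hs hsT.
  have [ha1 ha2 haM] := hab s hsT.
  apply: (@pw R M (a1 s) (a2 s) (l1 s) (l2 s) M1 M2 ha1 ha2 haM (dpos s hsT)) => b1 b2 hb1 hb2 hb.
  have := hs hsT b1 b2 hb1 hb2 hb; have := xbpos s hsT; nra.
have l2sign := fun t ht => @sign_keep R T 2 _ _ T (ler0n R 2) T0 odel2 aeb2 TT t ht.
split.
- move=> l2T0 t ht.
  have [h _] := l2sign t ht; have := h l2T0; have := dpos t ht.
  split; lra.
- move=> l2T0 t ht.
  have l2z := @zero_prop R T 2 _ _ T (ler0n R 2) odel2 aeb2 TT l2T0 t ht.
  split => //.
  have x1T : 0 < l1 T - l2 T.
    have := xbpos T TT; rewrite /xibar -l1T -l2T l2T0; lra.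
  have := proj1 (@sign_keep R T 1 _ _ T ler01 T0 oded aed TT t ht) x1T.
  rewrite l2z; lra.
- by move=> l2T0 t ht; have [_ h] := l2sign t ht; exact: h.
Qed.
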